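(* Let $\Gamma$ and $\Gamma'$ be triangulations of connected closed $2$-dimensional surfaces $M$ and $M'$, and let $F$ and $F'$ be faces of $\Gamma$ and $\Gamma'$ respectively. For every special homeomorphism $g:\partial F\to\partial F'$, the connected sum $\Gamma\#_g\Gamma'$ is $3$-colorable if and only if both $\Gamma$ and $\Gamma'$ are $3$-colorable.
   Context: A triangulation of a connected closed surface (not necessarily orientable) is a closed $2$-cell embedding of a connected finite simple graph all of whose faces are triangles. A homeomorphism $g:\partial F\to\partial F'$ is special if it maps vertices to vertices. The connected sum $\Gamma\#_g\Gamma'$ is the triangulation of $M\# M'$ obtained from $\Gamma$ and $\Gamma'$ by removing the interiors of $F$ and $F'$ and gluing $\partial F$ to $\partial F'$ via $g$. A graph is $3$-colorable if it admits a proper vertex coloring with $3$ colors. *)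

(* Defs.v *)
From HB Require Import structures.
From mathcomp Require Import all_boot.
Set Implicit Arguments. Unset Strict Implicit. Unset Printing Implicit Defensive.

(* Faces are
   indexed (not just a set of triples) so that e.g. K3 on the sphere, whose two
   faces have the same boundary, is allowed. *)

Section Tri.
Variables (V Fc : finType) (bd : Fc -> {set V}).

Definition tri_adj : rel V :=
  fun u v => (u != v) && [exists f, (u \in bd f) && (v \in bd f)].

Definition link_rel (v : V) : rel V :=
  fun a b => [exists f, [&& v \in bd f, a \in bd f, b \in bd f,
                          a != v, b != v & a != b]].

(* Gluing the triangles bd f along common edges yields a connected closed
   surface with the graph 2-cell embedded and all faces triangles. *)
Definition is_triangulation : Prop :=
  [/\ forall f, #|bd f| = 3,
      forall v, exists f, v \in bd f,
      forall u v, tri_adj u v ->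
        #|[set f | (u \in bd f) && (v \in bd f)]| = 2,
      (* every vertex link is connected (hence a single cycle: disk nbhd) *)
      forall v a b, tri_adj v a -> tri_adj v b -> connect (link_rel v) a b
    &
      forall u v, connect tri_adj u v].

Definition three_colorable : Prop :=
  exists c : V -> 'I_3, forall u v, tri_adj u v -> c u != c v.

End Tri.

Section ConnSum.
Variables (V Fc V' Fc' : finType) (bd : Fc -> {set V}) (bd' : Fc' -> {set V'}).
Variables (F : Fc) (F' : Fc') (g : V -> V').

(* g restricted to the vertices of F is a bijection onto the vertices of F';
   this is exactly the data of a special homeomorphism dF -> dF' (up to
   isotopy, which does not affect the resulting triangulation). *)
Definition special_map : Prop :=
  {in bd F &, injective g} /\ g @: bd F = bd' F'.

(* vertices of the connected sum: vertices of V not on F, plus all of V'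
   (vertices of F are identified with their images in F' under g) *)
Definition cs_vertex := ({x : V | x \notin bd F} + V')%type.
Definition cs_face := ({f : Fc | f != F} + {f : Fc' | f != F'})%type.

Definition cs_of_V (x : V) : cs_vertex :=
  if insub x is Some y then inl y else inr (g x).

Definition cs_bd (f : cs_face) : {set cs_vertex} :=
  match f with
  | inl f1 => cs_of_V @: bd (val f1)
  | inr f2 => [set inr x | x in bd' (val f2)]
  end.

End ConnSum.

Arguments special_map {V Fc V' Fc'} bd bd' F F' g.
Arguments cs_bd {V Fc V' Fc'} bd bd' F F' g f.

(* Main.v *)
Require Import Defs.
From mathcomp Require Import all_boot.
Set Implicit Arguments. Unset Strict Implicit. Unset Printing Implicit Defensive.

Lemma col_inj (V Fc : finType) (bd : Fc -> {set V}) (c : V -> 'I_3) f :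
  (forall u v, tri_adj bd u v -> c u != c v) -> {in bd f &, injective c}.
Proof.
move=> hc u v hu hv e; apply/eqP; apply: contraT => neq.
have: tri_adj bd u v by rewrite /tri_adj neq; apply/existsP; exists f; rewrite hu hv.
by move/hc; rewrite e eqxx.
Qed.

Lemma other_face (V Fc : finType) (bd : Fc -> {set V}) f u v :
  is_triangulation bd -> u \in bd f -> v \in bd f -> u != v ->
  exists2 f2, f2 != f & (u \in bd f2) && (v \in bd f2).
Proof.
case=> _ _ he _ _ hu hv neq.
have ad: tri_adj bd u v by rewrite /tri_adj neq; apply/existsP; exists f; rewrite hu hv.
have := he _ _ ad; rewrite (cardsD1 f) inE hu hv /= add1n => -[h1].
have : 0 < #|[set f0 | (u \in bd f0) && (v \in bd f0)] :\ f| by rewrite h1.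
case/card_gt0P => f2; rewrite !inE => /andP [n2 h2]; by exists f2.
Qed.

Lemma cs_of_V_inj (V Fc V' : finType) (bd : Fc -> {set V}) F (g : V -> V') :
  {in bd F &, injective g} -> injective (cs_of_V bd F g).
Proof.
move=> gi u v; rewrite /cs_of_V.
case: insubP => [y hy ey|hu]; case: insubP => [z hz ez|hv] //=.
- by case=> eyz; rewrite -ey -ez eyz.
- by case=> e; apply: gi => //; [move: hu | move: hv]; rewrite negbK.
Qed.

Lemma cs_of_V_F (V Fc V' : finType) (bd : Fc -> {set V}) F (g : V -> V') u :
  u \in bd F -> cs_of_V bd F g u = inr (g u).
Proof. by move=> hu; rewrite /cs_of_V insubN // negbK. Qed.

Theorem lemma3 (V Fc V' Fc' : finType) (bd : Fc -> {set V}) (bd' : Fc' -> {set V'})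
  (F : Fc) (F' : Fc') (g : V -> V') :
  is_triangulation bd -> is_triangulation bd' ->
  special_map bd bd' F F' g ->
  (three_colorable (cs_bd bd bd' F F' g) <->
   three_colorable bd /\ three_colorable bd').
Proof.
move=> T T' [gi gim]; split.
- case=> k hk; split.
  + exists (fun x => k (cs_of_V bd F g x)) => u v /andP [neq /existsP [f /andP [hu hv]]].
    case: (eqVneq f F) => [ef|fF].
    * subst f; rewrite !cs_of_V_F //.
      have gn : g u != g v by apply: contra neq => /eqP e; apply/eqP; apply: gi.
      have gu : g u \in bd' F' by rewrite -gim imset_f.
      have gv : g v \in bd' F' by rewrite -gim imset_f.
      have [f2 f2n /andP [h1 h2]] := other_face T' gu gv gn.
      apply: hk; rewrite /tri_adj; apply/andP; split; first by [].
      apply/existsP; exists (inr (exist _ f2 f2n)); rewrite /= !imset_f //.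
    * apply: hk; rewrite /tri_adj; apply/andP; split.
        by apply: contra neq => /eqP /(cs_of_V_inj gi) ->.
      apply/existsP; exists (inl (exist _ f fF)); rewrite /= !imset_f //.
  + exists (fun x => k (inr x)) => x y /andP [neq /existsP [f /andP [hx hy]]].
    case: (eqVneq f F') => [ef|fF].
    * subst f; move: hx hy; rewrite -gim => /imsetP [u hu ex] /imsetP [v hv ey]; subst x y.
      have uv : u != v by apply/eqP => e; move: neq; rewrite e eqxx.
      have [f1 f1n /andP [h1 h2]] := other_face T hu hv uv.
      apply: hk; rewrite /tri_adj; apply/andP; split; first by [].
      apply/existsP; exists (inl (exist _ f1 f1n)).
      by rewrite /= -(cs_of_V_F g hu) -(cs_of_V_F g hv) !imset_f.
    * apply: hk; rewrite /tri_adj; apply/andP; split; first by [].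
      apply/existsP; exists (inr (exist _ f fF)); rewrite /= !imset_f //.
- case=> [[c hc] [c' hc']].
  have ci := col_inj (f:=F) hc.
  have ci' := col_inj (f:=F') hc'.
  have gF u : u \in bd F -> g u \in bd' F' by move=> hu; rewrite -gim imset_f.
  have sur j : exists2 u, u \in bd F & c' (g u) = j.
    have hcard : #|(fun u => c' (g u)) @: bd F| = 3.
      rewrite card_in_imset; first by case: T => ->.
      by move=> u v hu hv /(ci' _ _ (gF _ hu) (gF _ hv)); apply: gi.
    have : (fun u => c' (g u)) @: bd F = [set: 'I_3].
      by apply/eqP; rewrite eqEcard subsetT cardsT card_ord hcard.
    move=> e; have : j \in [set: 'I_3] by rewrite inE.
    by rewrite -e => /imsetP [u hu ->]; exists u.
  pose s j := if [pick u in bd F | c' (g u) == j] is Some u then c u else j.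
  have sE u : u \in bd F -> s (c' (g u)) = c u.
    move=> hu; rewrite /s; case: pickP => [u0 /andP [hu0 /eqP e]|none].
      by congr c; apply: gi => //; apply: ci' => //; apply: gF.
    by have := none u; rewrite hu eqxx.
  have si : injective s.
    move=> j1 j2; have [u1 h1 <-] := sur j1; have [u2 h2 <-] := sur j2.
    by rewrite !sE // => /ci -> .
  pose k (w : cs_vertex V' bd F) := match w with inl y => c (val y) | inr x => s (c' x) end.
  have kE u : k (cs_of_V bd F g u) = c u.
    rewrite /cs_of_V; case: insubP => [y hy ey|hu] /=; first by rewrite ey.
    by rewrite sE // -(negbK (u \in _)).
  exists k => a b /andP [neq /existsP [[f1|f2] /andP [h1 h2]]].
  + move: h1 h2 => /= /imsetP [u hu ea] /imsetP [v hv eb]; subst a b.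
    rewrite !kE; apply: hc; rewrite /tri_adj; apply/andP; split.
      by apply/eqP => e; move: neq; rewrite e eqxx.
    by apply/existsP; exists (val f1); rewrite hu hv.
  + move: h1 h2 => /= /imsetP [x hx ea] /imsetP [y hy eb]; subst a b => /=.
    rewrite (inj_eq si); apply: hc'; rewrite /tri_adj; apply/andP; split.
      by apply/eqP => e; move: neq; rewrite e eqxx.
    by apply/existsP; exists (val f2); rewrite hx hy.
Qed.
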